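(* Let $\boldsymbol{\lambda}\in\Delta_N$, $\boldsymbol{\nu}=(\nu_1,\dots,\nu_N)\in\mathcal{P}_1(\mathbb{R})^N$, $\theta\in[0,1]$, $\nu^\theta=\mathrm{VMed}_{\boldsymbol{\lambda}}(\theta,\boldsymbol{\nu})$ and $\mu^\theta=\mathrm{HMed}_{\boldsymbol{\lambda}}(\theta,\boldsymbol{\nu})$. Then: (1) if $\nu_1,\dots,\nu_N$ are atomless, then so are $\nu^\theta$ and $\mu^\theta$; (2) if $\nu_1,\dots,\nu_N$ have connected supports, then so does $\mu^\theta$.
   Context: $\Delta_N$ is the unit simplex of $\mathbb{R}^N$; $\mathcal{P}_1(\mathbb{R})$ denotes Borel probability measures on $\mathbb{R}$ with finite first moment. For $\nu\in\mathcal{P}_1(\mathbb{R})$, $F_\nu(x)=\nu((-\infty,x])$ and $Q_\nu(t)=\inf\{x:F_\nu(x)\ge t\}$. For $\mathbf{x}\in\mathbb{R}^N$, $\mathrm{M}^-_{\boldsymbol{\lambda}}(\mathbf{x})=\inf\{y:\sum_{i:x_i\le y}\lambda_i\ge\frac12\}$, $\mathrm{M}^+_{\boldsymbol{\lambda}}(\mathbf{x})=\sup\{y:\sum_{i:x_i<y}\lambda_i\le\frac12\}$. $\mathrm{VMed}_{\boldsymbol{\lambda}}(\theta,\boldsymbol{\nu})$ is the probability measure with cdf $(1-\theta)\mathrm{M}^-_{\boldsymbol{\lambda}}(F_{\nu_1}(x),\dots,F_{\nu_N}(x))+\theta\mathrm{M}^+_{\boldsymbol{\lambda}}(F_{\nu_1}(x),\dots,F_{\nu_N}(x))$;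 $\mathrm{HMed}_{\boldsymbol{\lambda}}(\theta,\boldsymbol{\nu})$ is the probability measure whose quantile function on $(0,1)$ is $(1-\theta)\mathrm{M}^-_{\boldsymbol{\lambda}}(Q_{\nu_1}(t),\dots,Q_{\nu_N}(t))+\theta\mathrm{M}^+_{\boldsymbol{\lambda}}(Q_{\nu_1}(t),\dots,Q_{\nu_N}(t))$. *)

(* Defs.v *)
From HB Require Import structures.
From mathcomp Require Import all_boot all_order all_algebra.
From mathcomp Require Import all_classical all_reals all_analysis.
Set Implicit Arguments. Unset Strict Implicit. Unset Printing Implicit Defensive.
Import Order.TTheory GRing.Theory Num.Theory numFieldNormedType.Exports.
Local Open Scope classical_set_scope.
Local Open Scope ring_scope.

Section Defs.
Context {R : realType}.

Definition in_simplex (N : nat) (lam : 'I_N -> R) : Prop :=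
  (forall i, 0 <= lam i) /\ \sum_(i < N) lam i = 1.

Definition first_moment_finite (mu : probability R R) : Prop :=
  (\int[mu]_x (`|x|%:E) < +oo)%E.

Definition cdf (mu : probability R R) (x : R) : R := fine (mu `]-oo, x]%classic).

Definition quantile (mu : probability R R) (t : R) : R :=
  inf [set x | t <= cdf mu x].

Definition Mminus (N : nat) (lam : 'I_N -> R) (x : 'I_N -> R) : R :=
  inf [set y | 2^-1 <= \sum_(i < N | x i <= y) lam i].

Definition Mplus (N : nat) (lam : 'I_N -> R) (x : 'I_N -> R) : R :=
  sup [set y | \sum_(i < N | x i < y) lam i <= 2^-1].

Definition is_VMed (N : nat) (lam : 'I_N -> R) (theta : R)
  (nu : 'I_N -> probability R R) (mu : probability R R) : Prop :=
  forall x, cdf mu x = (1 - theta) * Mminus lam (fun i => cdf (nu i) x)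
                      + theta * Mplus lam (fun i => cdf (nu i) x).

Definition is_HMed (N : nat) (lam : 'I_N -> R) (theta : R)
  (nu : 'I_N -> probability R R) (mu : probability R R) : Prop :=
  forall t, 0 < t < 1 ->
    quantile mu t = (1 - theta) * Mminus lam (fun i => quantile (nu i) t)
                    + theta * Mplus lam (fun i => quantile (nu i) t).

Definition atomless (mu : probability R R) : Prop :=
  forall x : R, mu [set x] = 0%E.

Definition msupport (mu : probability R R) : set R :=
  [set x | forall e : R, 0 < e -> (0 < mu (ball x e))%E].

End Defs.

(* Main.v *)
Require Import Defs.
From HB Require Import structures.
From mathcomp Require Import all_boot all_order all_algebra.
From mathcomp Require Import all_classical all_reals all_analysis.
From mathcomp Require Import lra.
Set Implicit Arguments. Unset Strict Implicit. Unset Printing Implicit Defensive.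
Import Order.TTheory GRing.Theory Num.Theory numFieldNormedType.Exports.
Local Open Scope classical_set_scope.
Local Open Scope ring_scope.
Local Notation cdf := Defs.cdf.
Local Notation quantile := Defs.quantile.
Local Notation Mminus := Defs.Mminus.
Local Notation Mplus := Defs.Mplus.
Local Notation msupport := Defs.msupport.
Local Notation atomless := Defs.atomless.

Section M.
Context {R : realType} (mu : probability R R).

Definition mm (A : set R) : R := fine (mu A).

Lemma mmE A : measurable A -> mu A = (mm A)%:E.
Proof.
move=> mA; rewrite /mm fineK // ge0_fin_numE ?measure_ge0 //.
by apply: (le_lt_trans (probability_le1 mu mA)); rewrite ltry.
Qed.

Lemma mm_ge0 A : measurable A -> 0 <= mm A.
Proof. by move=> mA; rewrite -lee_fin -mmE ?measure_ge0. Qed.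

Lemma mm_le1 A : measurable A -> mm A <= 1.
Proof. by move=> mA; rewrite -lee_fin -mmE ?probability_le1. Qed.

Lemma mm_split A B C : measurable B -> measurable C -> A = B `|` C ->
  B `&` C = set0 -> mm A = mm B + mm C.
Proof.
move=> mB mC -> BC; apply/eqP; rewrite -eqe EFinD -!mmE //; last exact: measurableU.
by rewrite measureU.
Qed.

Lemma mm_le A B : measurable A -> measurable B -> A `<=` B -> mm A <= mm B.
Proof.
by move=> mA mB AB; rewrite -lee_fin -!mmE //; apply: le_measure; rewrite ?inE.
Qed.

Lemma mm_setT : mm setT = 1.
Proof. by rewrite /mm probability_setT. Qed.

Lemma cdf_mm x : cdf mu x = mm `]-oo, x].
Proof. by []. Qed.

Lemma cdf_diff x y : x <= y -> cdf mu y = cdf mu x + mm `]x, y].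
Proof.
move=> xy; rewrite !cdf_mm; apply: mm_split => //.
  apply/seteqP; split => z /=; rewrite !in_itv /=.
    by case: (leP z x) => /= zx zy; [left|right]; rewrite ?zx ?zy.
  case=> [zx|/andP[xz zy]]; [exact: le_trans xy|exact: zy].
apply/seteqP; split => z //= [] ; rewrite !in_itv /= => zx /andP[xz _].
by move: (lt_le_trans xz zx); rewrite ltxx.
Qed.

Lemma cdf_le x y : x <= y -> cdf mu x <= cdf mu y.
Proof. by move=> xy; rewrite (cdf_diff xy) lerDl mm_ge0. Qed.

Lemma cdf_ge0 x : 0 <= cdf mu x.
Proof. exact: mm_ge0. Qed.

Lemma cdf_le1 x : cdf mu x <= 1.
Proof. exact: mm_le1. Qed.

End M.

Section Lim.
Context {R : realType} (mu : probability R R).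

Lemma mm_dec (A : nat -> set R) B : (forall n, measurable (A n)) -> measurable B ->
  (forall n, A n.+1 `<=` A n) -> \bigcap_n A n = B ->
  forall e, 0 < e -> exists n, mm mu (A n) < mm mu B + e.
Proof.
move=> mA mB dec capB e e0.
have := @nonincreasing_cvg_mu _ R R mu A.
rewrite capB => H.
have : nonincreasing_seq A.
  by apply/nonincreasing_seqP => n; rewrite subsetEset; exact: dec.
have : (mu (A 0%N) < +oo)%E.
  by apply: (le_lt_trans (probability_le1 mu (mA 0%N))); rewrite ltry.
move=> h /(H h mA mB) HH.
have : (mu \o A) x @[x --> \oo] --> (mm mu B)%:E.
  by rewrite /mm fineK //; rewrite ge0_fin_numE ?measure_ge0 // (le_lt_trans (probability_le1 mu mB)) ?ltry.
move=> /fine_cvgP [_ /cvgr_lt /(_ (mm mu B + e))].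
rewrite ltrDl => /(_ e0) [N _ HN]; exists N; exact: (HN N (leqnn N)).
Qed.

End Lim.

Section Lim2.
Context {R : realType} (mu : probability R R).

Lemma mm0 : mm mu set0 = 0.
Proof. by rewrite /mm measure0. Qed.

Lemma exists_nat_gt (x : R) : exists n : nat, x < n%:R.
Proof.
exists (Num.Def.archi_bound `|x|); apply: (le_lt_trans (ler_norm x)).
exact: Num.Theory.archi_boundP.
Qed.

Lemma itv_abs (q x t : R) : q - t <= x -> x <= q + t -> `|x - q| <= t.
Proof. by move=> h1 h2; rewrite ler_norml; apply/andP; split; lra. Qed.

Lemma atom_small q : mu [set q] = 0%E ->
  forall e, 0 < e -> exists2 d, 0 < d & mm mu `[q - d, q + d] < e.
Proof.
move=> q0 e e0.
pose A := (fun n : nat => `[q - n.+1%:R^-1, q + n.+1%:R^-1]%classic).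
have mA : forall n, measurable (A n) by move=> n; exact: measurable_itv.
have dec : forall n, A n.+1 `<=` A n.
  move=> n x; rewrite /A /= !in_itv /= => /andP[h1 h2].
  have hn : n.+2%:R^-1 <= n.+1%:R^-1 :> R.
    by rewrite lef_pV2 ?posrE ?ler_nat // ltr0n.
  by rewrite (le_trans _ h1) ?(le_trans h2) ?lerD2l ?lerD2r ?lerN2.
have cap : \bigcap_n A n = [set q].
  apply/seteqP; split => x /=; last first.
    move=> -> n _; rewrite /A /=; rewrite (@in_itv _ R) /= gerBl lerDl invr_ge0 ler0n.
  by [].
  move=> H; apply/eqP; rewrite -subr_eq0 -normr_eq0; apply/negP => /negP hx.
  have hpos : 0 < `|x - q| by rewrite lt_neqAle eq_sym hx normr_ge0.
  have [k hk] := ltr_add_invr hpos.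
  have := H k I; rewrite /A /= (@in_itv _ R) /= => /andP[h1 h2].
  move: hk; rewrite add0r.
  have := itv_abs h1 h2.
  by move=> a b; move: (le_lt_trans a b); rewrite ltxx.
have [n] := @mm_dec R mu A [set q] mA (measurable_set1 q) dec cap e e0.
rewrite /mm q0 /= add0r => H.
by exists n.+1%:R^-1; rewrite ?invr_gt0 ?ltr0n.
Qed.

Lemma cdf_large s : s < 1 -> exists w, s <= cdf mu w.
Proof.
move=> s1.
pose A := (fun n : nat => `]n%:R, +oo[%classic : set R).
have mA : forall n, measurable (A n) by move=> n; exact: measurable_itv.
have dec : forall n, A n.+1 `<=` A n.
  move=> n x; rewrite /A /= !(@in_itv _ R) /= !andbT => h.
  by apply: le_lt_trans h; rewrite ler_nat.
have cap : \bigcap_n A n = set0.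
  apply/seteqP; split => x //= H.
  have [n hn] := exists_nat_gt x.
  by have := H n I; rewrite /A /= (@in_itv _ R) /= andbT => /(lt_trans hn); rewrite ltxx.
have s1' : 0 < 1 - s by rewrite subr_gt0.
have [n] := @mm_dec R mu A set0 mA measurable0 dec cap (1 - s) s1'.
rewrite mm0 add0r => H; exists n%:R.
have : mm mu setT = cdf mu n%:R + mm mu (A n).
  rewrite cdf_mm; apply: (@mm_split R mu setT `]-oo, n%:R] (A n)); first exact: measurable_itv.
    exact: mA.
    by rewrite /A (itv_setU_setT false (n%:R : R)).
  apply/seteqP; split => x //= []; rewrite /A /= !(@in_itv _ R) /= andbT => h1 h2.
  by move: (lt_le_trans h2 h1); rewrite ltxx.
rewrite mm_setT => h; lra.
Qed.

Lemma cdf_small s : 0 < s -> exists w, cdf mu w < s.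
Proof.
move=> s0.
pose A := (fun n : nat => `]-oo, - n%:R]%classic : set R).
have mA : forall n, measurable (A n) by move=> n; exact: measurable_itv.
have dec : forall n, A n.+1 `<=` A n.
  move=> n x; rewrite /A /= !(@in_itv _ R) /= => h.
  by apply: (le_trans h); rewrite lerN2 ler_nat.
have cap : \bigcap_n A n = set0.
  apply/seteqP; split => x //= H.
  have [n hn] := exists_nat_gt (- x).
  have := H n I; rewrite /A /= (@in_itv _ R) /= => h.
  by move: hn; rewrite ltrNl => /(le_lt_trans h); rewrite ltxx.
have [n] := @mm_dec R mu A set0 mA measurable0 dec cap s s0.
by rewrite mm0 add0r => H; exists (- n%:R).
Qed.

End Lim2.


Section Quant.
Context {R : realType} (mu : probability R R).

Let St (t : R) := [set x | t <= cdf mu x].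

Lemma St_lb t : 0 < t -> has_lbound (St t).
Proof.
move=> t0; have [w hw] := cdf_small mu t0; exists w => x /= hx.
rewrite leNgt; apply/negP => xw.
by move: (le_lt_trans (cdf_le mu (ltW xw)) hw); rewrite ltNge hx.
Qed.

Lemma St_ne t : t < 1 -> St t !=set0.
Proof. by move=> t1; have [w hw] := cdf_large mu t1; exists w. Qed.

Lemma Q_le t w : 0 < t -> t <= cdf mu w -> quantile mu t <= w.
Proof. by move=> t0 h; apply: (ge_inf (St_lb t0)). Qed.

Lemma Q_lt t w : 0 < t -> w < quantile mu t -> cdf mu w < t.
Proof.
move=> t0 h; rewrite ltNge; apply/negP => /(Q_le t0) h'.
by move: (lt_le_trans h h'); rewrite ltxx.
Qed.

Lemma Q_gt t w : t < 1 -> quantile mu t < w -> t <= cdf mu w.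
Proof.
move=> t1 /(inf_lt (St_ne t1)) [y /= hy yw].
exact: (le_trans hy (cdf_le mu (ltW yw))).
Qed.

Lemma Q_mono s t : 0 < s -> s <= t -> t < 1 -> quantile mu s <= quantile mu t.
Proof.
move=> s0 st t1; rewrite leNgt; apply/negP => h.
pose w := (quantile mu t + quantile mu s) / 2.
have h1 : quantile mu t < w by rewrite /w; lra.
have h2 : w < quantile mu s by rewrite /w; lra.
have := Q_gt t1 h1; have := Q_lt s0 h2; lra.
Qed.

Lemma mm_ball_pos x e : 0 < mm mu (ball x e) -> (0 < mu (ball x e))%E.
Proof.
by rewrite (mmE mu (measurable_realfun.measurable_ball x e)) lte_fin.
Qed.

Lemma Q_supp t : 0 < t < 1 -> msupport mu (quantile mu t).
Proof.
case/andP => t0 t1 e e0; apply: mm_ball_pos.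
set q := quantile mu t.
have h1 : cdf mu (q - e / 2) < t by apply: Q_lt => //; lra.
have h2 : t <= cdf mu (q + e / 2) by apply: Q_gt => //; lra.
have := cdf_diff mu (_ : q - e / 2 <= q + e / 2) => /(_ ltac:(lra)) hd.
have : mm mu `]q - e / 2, q + e / 2] <= mm mu (ball q e).
  apply: mm_le; [exact: measurable_itv|exact: measurable_realfun.measurable_ball|].
  rewrite ball_itv => z /=; rewrite !(@in_itv _ R) /= => /andP[z1 z2].
  apply/andP; split; lra.
lra.
Qed.

End Quant.

Section Med.
Context {R : realType} (N : nat) (lam : 'I_N -> R).
Hypothesis hlam : in_simplex lam.

Lemma sum_pred_le (P Q : pred 'I_N) : (forall i, P i -> Q i) ->
  \sum_(i | P i) lam i <= \sum_(i | Q i) lam i.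
Proof.
move=> PQ; rewrite [X in X <= _]big_mkcond [X in _ <= X]big_mkcond /=.
apply: ler_sum => i _; case: ifP => Pi; first by rewrite (PQ i Pi).
by case: ifP => _ //; case: hlam => h _; exact: h.
Qed.

Lemma sum_all (P : pred 'I_N) : (forall i, P i) -> \sum_(i | P i) lam i = 1.
Proof.
move=> hP; case: hlam => _ <-; apply: eq_bigl => i; exact: hP.
Qed.

Lemma sum_none (P : pred 'I_N) : (forall i, ~~ P i) -> \sum_(i | P i) lam i = 0.
Proof. by move=> hP; rewrite big_pred0 // => i; apply/negbTE/hP. Qed.

Definition Bnd (a : 'I_N -> R) := \sum_i `|a i|.

Lemma Bnd_ge (a : 'I_N -> R) i : `|a i| <= Bnd a.
Proof.
rewrite /Bnd (bigD1 i) //= lerDl; apply: sumr_ge0 => j _; exact: normr_ge0.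
Qed.

Lemma Bnd_le a i : a i <= Bnd a.
Proof. by have := Bnd_ge a i; rewrite ler_norml => /andP[]. Qed.

Lemma Bnd_ge' a i : - Bnd a <= a i.
Proof. by have := Bnd_ge a i; rewrite ler_norml => /andP[]. Qed.

Lemma Mminus_shift (a b : 'I_N -> R) c : (forall i, b i <= a i + c) ->
  Mminus lam b <= Mminus lam a + c.
Proof.
move=> hab; rewrite /Mminus -lerBlDr.
set Sa := [set y | _ <= \sum_(i < N | a i <= y) lam i].
set Sb := [set y | _ <= \sum_(i < N | b i <= y) lam i].
have neA : Sa !=set0.
  exists (Bnd a); rewrite /Sa /= sum_all; first lra.
  exact: Bnd_le.
have lbB : has_lbound Sb.
  exists (- Bnd b) => y; rewrite /Sb /= => hy.
  rewrite leNgt; apply/negP => yl.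
  move: hy; rewrite sum_none; first lra.
  move=> i; rewrite -ltNge; exact: (lt_le_trans yl (Bnd_ge' b i)).
apply: lb_le_inf => // y hy; rewrite lerBlDr.
apply: (ge_inf lbB); rewrite /Sb /=.
apply: (le_trans hy); apply: sum_pred_le => i hi.
by apply: (le_trans (hab i)); rewrite lerD2r.
Qed.

Lemma Mplus_shift (a b : 'I_N -> R) c : (forall i, b i <= a i + c) ->
  Mplus lam b <= Mplus lam a + c.
Proof.
move=> hab; rewrite /Mplus.
set Ta := [set y | \sum_(i < N | a i < y) lam i <= _].
set Tb := [set y | \sum_(i < N | b i < y) lam i <= _].
have neB : Tb !=set0.
  exists (- Bnd b); rewrite /Tb /= sum_none; first lra.
  by move=> i; rewrite -leNgt; exact: Bnd_ge'.
have ubA : has_ubound Ta.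
  exists (Bnd a) => y; rewrite /Ta /= => hy.
  rewrite leNgt; apply/negP => yl.
  move: hy; rewrite sum_all; first lra.
  move=> i; exact: (le_lt_trans (Bnd_le a i) yl).
apply: ge_sup => // y hy; rewrite -lerBlDr.
apply: (ub_le_sup ubA); rewrite /Ta /=.
apply: le_trans hy; apply: sum_pred_le => i hi.
apply: (le_lt_trans (hab i)); rewrite -ltrBrDr //.
Qed.

End Med.

Section Atom.
Context {R : realType} (mu : probability R R).

Lemma mm_set1 x : mu [set x] = 0%E <-> mm mu [set x] = 0.
Proof.
rewrite (mmE mu (measurable_set1 x)); split; first by move=> [].
by move=> ->.
Qed.

Lemma atomless_Q_strict : atomless mu ->
  forall s t, 0 < s -> s < t -> t < 1 -> quantile mu s < quantile mu t.
Proof.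
move=> hat s t s0 st t1; rewrite ltNge; apply/negP => hle.
have hQ := Q_mono mu s0 (ltW st) t1.
set q := quantile mu s in hle hQ.
have ts0 : 0 < t - s by rewrite subr_gt0.
have [d d0 hd] := atom_small (hat q) ts0.
have h1 : t <= cdf mu (q + d) by apply: Q_gt => //; lra.
have h2 : cdf mu (q - d) < s by apply: Q_lt => //; rewrite /q; lra.
have := cdf_diff mu (_ : q - d <= q + d) => /(_ ltac:(lra)) hdf.
have : mm mu `]q - d, q + d] <= mm mu `[q - d, q + d].
  apply: mm_le; [exact: measurable_itv|exact: measurable_itv|].
  move=> z /=; rewrite !(@in_itv _ R) /= => /andP[z1 z2].
  by apply/andP; split => //; apply: ltW.
lra.
Qed.

Lemma Q_strict_atomless :
  (forall s t, 0 < s -> s < t -> t < 1 -> quantile mu s < quantile mu t) ->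
  atomless mu.
Proof.
move=> hQ x; apply/mm_set1.
set c := mm mu [set x].
have c0 : 0 <= c := mm_ge0 mu (measurable_set1 x).
rewrite le_eqVlt eq_sym in c0; case/orP: c0 => [/eqP //|c0].
exfalso.
set a := mm mu `]-oo, x[.
have a0 : 0 <= a by apply: mm_ge0; exact: measurable_itv.
have hcdf : cdf mu x = a + c.
  rewrite cdf_mm; apply: mm_split; [exact: measurable_itv|exact: measurable_set1| |].
    by rewrite (setUitv1 true (_ : -oo%O <= BLeft x)%O).
  apply/seteqP; split => z //= []; rewrite (@in_itv _ R) /= => h hz.
  by move: h; rewrite hz ltxx.
have c1 : cdf mu x <= 1 := cdf_le1 mu x.
have hq : forall t, a < t -> t < a + c -> quantile mu t = x.
  move=> t at1 tac; have t0 : 0 < t by lra.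
  apply/eqP; rewrite eq_le; apply/andP; split.
    by apply: Q_le => //; rewrite hcdf ltW.
  rewrite leNgt; apply/negP => hlt.
  pose w := (quantile mu t + x) / 2.
  have h1 : quantile mu t < w by rewrite /w; lra.
  have h2 : w < x by rewrite /w; lra.
  have := Q_gt (_ : t < 1) h1 => /(_ ltac:(lra)) h3.
  have : cdf mu w <= a.
    rewrite cdf_mm; apply: mm_le; [exact: measurable_itv|exact: measurable_itv|].
    move=> z /=; rewrite !(@in_itv _ R) /= => hz; exact: le_lt_trans hz h2.
  lra.
have := hQ (a + c / 3) (a + 2 * c / 3) ltac:(lra) ltac:(lra) ltac:(lra).
rewrite !hq; [by rewrite ltxx| lra | lra | lra | lra].
Qed.

End Atom.

Lemma fin_min {R : realType} (N : nat) (f : 'I_N -> R) : (forall i, 0 < f i) ->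
  exists2 d, 0 < d & forall i, d <= f i.
Proof.
move=> fp; set S := \sum_i (f i)^-1.
have S0 : 0 <= S by apply: sumr_ge0 => i _; rewrite invr_ge0 ltW.
exists (1 + S)^-1; first by rewrite invr_gt0; lra.
move=> i; rewrite -[f i]invrK lef_pV2 ?posrE ?invr_gt0 //; last lra.
have : (f i)^-1 <= S.
  by rewrite /S (bigD1 i) //= lerDl; apply: sumr_ge0 => j _; rewrite invr_ge0 ltW.
lra.
Qed.

Section Mth.
Context {R : realType} (N : nat) (lam : 'I_N -> R) (theta : R).
Hypothesis hlam : in_simplex lam.
Hypothesis hth : 0 <= theta <= 1.

Definition Mth (a : 'I_N -> R) := (1 - theta) * Mminus lam a + theta * Mplus lam a.

Lemma Mth_shift (a b : 'I_N -> R) c : (forall i, b i <= a i + c) ->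
  Mth b <= Mth a + c.
Proof.
move=> hab; rewrite /Mth.
have h1 := Mminus_shift hlam hab; have h2 := Mplus_shift hlam hab.
case/andP: hth => t0 t1.
have e1 : 0 <= (1 - theta) * (Mminus lam a + c - Mminus lam b).
  by apply: mulr_ge0; lra.
have e2 : 0 <= theta * (Mplus lam a + c - Mplus lam b).
  by apply: mulr_ge0; lra.
nra.
Qed.

End Mth.

Section Supp.
Context {R : realType} (mu : probability R R).

Definition RC := forall t, 0 < t < 1 -> forall e, 0 < e ->
  exists s, (t < s < 1) /\ quantile mu s < quantile mu t + e.

Lemma supp_RC : connected (msupport mu) -> RC.
Proof.
move=> /connected_intervalP hI t /andP[t0 t1] e e0.
case: (pselect (exists s, (t < s < 1) /\ quantile mu s < quantile mu t + e)) => // H.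
exfalso.
have hge : forall s, t < s < 1 -> quantile mu t + e <= quantile mu s.
  move=> s hs; rewrite leNgt; apply/negP => h; apply: H; exists s; split => //.
set q := quantile mu t in hge.
pose s' := (t + 1) / 2.
have hs' : t < s' < 1 by apply/andP; split; rewrite /s'; lra.
have hqs := hge s' hs'.
have sq : msupport mu q by apply: Q_supp; rewrite t0 t1.
have ss' : msupport mu (quantile mu s').
  by apply: Q_supp; case/andP: hs' => a b; apply/andP; split => //; lra.
have sz : msupport mu (q + e / 2).
  by apply: (hI _ _ sq ss'); apply/andP; split; lra.
have /sz : 0 < e / 4 by lra.
rewrite (mmE mu (measurable_realfun.measurable_ball _ _)) lte_fin => hpos.
have h1 : t <= cdf mu (q + e / 4) by apply: Q_gt => //; rewrite /q; lra.
have h2 : cdf mu (q + 3 * e / 4) <= t.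
  rewrite leNgt; apply/negP => hw.
  set w := q + 3 * e / 4 in hw.
  have [s [hs hsw]] : exists s, (t < s < 1) /\ s <= cdf mu w.
    case: (leP (cdf mu w) s') => hc.
      exists (cdf mu w); split => //; apply/andP; split => //.
      by case/andP: hs' => _ ?; lra.
    by exists s'; split => //; apply: ltW.
  have := hge s hs; have : quantile mu s <= w.
    by apply: Q_le => //; case/andP: hs => ? ?; lra.
  rewrite /w; lra.
have := cdf_diff mu (_ : q + e / 4 <= q + 3 * e / 4) => /(_ ltac:(lra)) hd.
have : mm mu (ball (q + e / 2) (e / 4)) <= mm mu `]q + e / 4, q + 3 * e / 4].
  apply: mm_le; [exact: measurable_realfun.measurable_ball|exact: measurable_itv|].
  rewrite ball_itv => z /=; rewrite !(@in_itv _ R) /= => /andP[z1 z2].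
  apply/andP; split; lra.
lra.
Qed.

Lemma ball_sub (x r z e : R) : z - e <= x - r -> x + r <= z + e -> ball x r `<=` ball z e.
Proof.
move=> h1 h2; rewrite !ball_itv => w /=; rewrite !(@in_itv _ R) /= => /andP[w1 w2].
apply/andP; split; lra.
Qed.

Lemma RC_supp : RC -> connected (msupport mu).
Proof.
move=> hRC; apply/connected_intervalP => x y sx sy z /andP[xz zy].
apply: contrapT => hz.
case: (pselect (exists e, 0 < e /\ ~ (0 < mu (ball z e))%E)) => [[e [e0 he]]|H];
  last by apply: hz => e e0; apply: contrapT => h; apply: H; exists e.
have mb (r w : R) : measurable (ball w r : set R) by exact: measurable_realfun.measurable_ball.
have hze : mm mu (ball z e) = 0.
  move: he; rewrite (mmE mu (mb _ _)) lte_fin => he.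
  apply/eqP; rewrite eq_le mm_ge0 // andbT; rewrite leNgt; exact/negP.
have sub0 : forall A, measurable A -> A `<=` ball z e -> mm mu A = 0.
  move=> A mA hA; apply/eqP; rewrite eq_le mm_ge0 // andbT -hze.
  exact: mm_le.
have supp_pos : forall w r, msupport mu w -> 0 < r -> 0 < mm mu (ball w r).
  by move=> w r /(_ r) hw r0; move: (hw r0); rewrite (mmE mu (mb _ _)) lte_fin.
have hx : x <= z - e.
  rewrite leNgt; apply/negP => hx.
  have r0 : 0 < x - (z - e) by lra.
  have := supp_pos _ _ sx r0; rewrite sub0 ?ltxx //.
  by apply: ball_sub; lra.
have hy : z + e <= y.
  rewrite leNgt; apply/negP => hy.
  have r0 : 0 < z + e - y by lra.
  have := supp_pos _ _ sy r0; rewrite sub0 ?ltxx //.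
  by apply: ball_sub; lra.
set t := cdf mu z.
have tpos : 0 < t.
  have := supp_pos _ _ sx e0.
  have : mm mu (ball x e) <= t.
    rewrite /t cdf_mm; apply: mm_le => //.
    rewrite ball_itv => w /=; rewrite !(@in_itv _ R) /= => /andP[w1 w2]; lra.
  lra.
have tlt1 : t < 1.
  have := supp_pos _ _ sy e0; rewrite ball_itv => hp.
  have : mm mu (`]-oo, z] `|` `]y - e, y + e[) = t + mm mu `]y - e, y + e[.
    rewrite /t cdf_mm; apply: mm_split => //; try exact: measurable_itv.
    apply/seteqP; split => w //= []; rewrite !(@in_itv _ R) /= => w1 /andP[w2 w3].
    lra.
  have : mm mu (`]-oo, z] `|` `]y - e, y + e[) <= 1.
    by apply: mm_le1; apply: measurableU => //; exact: measurable_itv.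
  lra.
have [s [/andP[ts s1] hs]] := hRC t (introT andP (conj tpos tlt1)) (e / 2) ltac:(lra).
have hQt : quantile mu t <= z - e / 2.
  apply: Q_le => //.
  have := cdf_diff mu (_ : z - e / 2 <= z) => /(_ ltac:(lra)) hd.
  rewrite sub0 in hd; first by rewrite /t hd addr0.
    exact: measurable_itv.
  rewrite ball_itv => w /=; rewrite !(@in_itv _ R) /= => /andP[w1 w2]; lra.
have hQs : z + e / 2 <= quantile mu s.
  rewrite leNgt; apply/negP => hlt.
  pose w := (quantile mu s + (z + e / 2)) / 2.
  have h1 : quantile mu s < w by rewrite /w; lra.
  have := Q_gt s1 h1 => h2.
  have := cdf_le mu (_ : w <= z + e / 2) => /(_ ltac:(rewrite /w; lra)) h3.
  have := cdf_diff mu (_ : z <= z + e / 2) => /(_ ltac:(lra)) hd.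
  rewrite sub0 ?addr0 -/t in hd; first lra.
    exact: measurable_itv.
  rewrite ball_itv => u /=; rewrite !(@in_itv _ R) /= => /andP[u1 u2]; lra.
lra.
Qed.

End Supp.

Theorem lemma4p5 (R : realType) (N : nat) (lam : 'I_N -> R)
  (nu : 'I_N -> probability R R) (theta : R)
  (nutheta mutheta : probability R R) :
  in_simplex lam ->
  (forall i, first_moment_finite (nu i)) ->
  0 <= theta <= 1 ->
  is_VMed lam theta nu nutheta ->
  is_HMed lam theta nu mutheta ->
  ((forall i, atomless (nu i)) -> atomless nutheta /\ atomless mutheta) /\
  ((forall i, connected (msupport (nu i))) -> connected (msupport mutheta)).
Proof.
move=> hlam _ hth hV hH.
have eqV : forall x, cdf nutheta x = Mth lam theta (fun i => cdf (nu i) x) := hV.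
have eqH : forall t, 0 < t < 1 ->
  quantile mutheta t = Mth lam theta (fun i => quantile (nu i) t) := hH.
have N0 : (0 < N)%N.
  rewrite lt0n; apply/negP => /eqP N0.
  case: hlam => _; rewrite big1 => [|i _]; last by move: (ltn_ord i); rewrite {2}N0.
  by move/eqP; rewrite eq_sym oner_eq0.
pose i0 := Ordinal N0.
split.
- move=> hat; split.
  + move=> x; apply/mm_set1.
    have c0 := mm_ge0 nutheta (measurable_set1 x).
    apply/eqP; rewrite eq_le c0 andbT leNgt; apply/negP => cpos.
    set c := mm nutheta [set x] in cpos.
    have c2 : 0 < c / 2 by lra.
    have /choice [d hd] : forall i : 'I_N, exists d : R,
        0 < d /\ mm (nu i) `[x - d, x + d] < c / 2.
      move=> i; have [d d0 hd] := atom_small (hat i x) c2; by exists d.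
    have [del del0 hdel] := fin_min (fun i => (proj1 (hd i))).
    have hF : forall i, cdf (nu i) x <= cdf (nu i) (x - del) + c / 2.
      move=> i; rewrite (cdf_diff (nu i) (_ : x - del <= x)); last lra.
      rewrite lerD2l; apply: ltW; apply: le_lt_trans (proj2 (hd i)).
      apply: mm_le; try exact: measurable_itv.
      move=> z /=; rewrite !(@in_itv _ R) /= => /andP[z1 z2].
      have := hdel i => hdi; apply/andP; split; lra.
    have := Mth_shift hlam hth hF; rewrite -!eqV => hM.
    have := cdf_diff nutheta (_ : x - del <= x) => /(_ ltac:(lra)) hd2.
    have : c <= mm nutheta `]x - del, x].
      apply: mm_le; [exact: measurable_set1|exact: measurable_itv|].
      by move=> z /= ->; rewrite (@in_itv _ R) /= lexx andbT; lra.
    lra.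
  + apply: Q_strict_atomless => s t s0 st t1.
    rewrite !eqH; [|apply/andP; split; lra|apply/andP; split; lra].
    have hlt : forall i, 0 < quantile (nu i) t - quantile (nu i) s.
      by move=> i; rewrite subr_gt0; apply: atomless_Q_strict.
    have [ep ep0 hep] := fin_min hlt.
    have hb : forall i, quantile (nu i) s <= quantile (nu i) t + (- ep).
      by move=> i; have := hep i; lra.
    have := Mth_shift hlam hth hb; lra.
- move=> hc; apply: RC_supp => t /andP[t0 t1] e e0.
  have e2 : 0 < e / 2 by lra.
  have /choice [sf hsf] : forall i : 'I_N, exists s,
      (t < s < 1) /\ quantile (nu i) s < quantile (nu i) t + e / 2.
    by move=> i; apply: supp_RC (hc i) _ _ _ e2; rewrite t0 t1.
  have hpos : forall i, 0 < sf i - t.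
    by move=> i; case: (hsf i) => /andP[? _] _; lra.
  have [del del0 hdel] := fin_min hpos.
  exists (t + del / 2); split.
    have := hdel i0; case: (hsf i0) => /andP[_ ?] _.
    by move=> ?; apply/andP; split; lra.
  have s0 : 0 < t + del / 2 < 1.
    have := hdel i0; case: (hsf i0) => /andP[_ ?] _.
    by move=> ?; apply/andP; split; lra.
  rewrite !eqH ?t0 ?t1 //.
  have hb : forall i, quantile (nu i) (t + del / 2) <= quantile (nu i) t + e / 2.
    move=> i; case: (hsf i) => /andP[ts s1] hq.
    apply: ltW; apply: le_lt_trans hq; apply: Q_mono => //; try lra.
    by have := hdel i; lra.
  have := Mth_shift hlam hth hb; lra.
Qed.
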